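(* Let $\epsilon$ be a sequence to which Algorithm A (described below) is applied. Suppose that at some step of the algorithm the current sequence has an occurrence of $p$ or of $q$ at position $i$. Then among the entries of the current sequence in positions $i,i+1,i+2,i+3$, only those in positions $i$ and $i+2$ can have been changed from the original sequence $\epsilon$.
   Context: The reduction of an integer word replaces each occurrence of its $k$-th smallest distinct value by $k-1$; a consecutive pattern $\underline{p_1p_2p_3p_4}$ occurs in a sequence at position $i$ if the reduction of its entries in positions $i,\dots,i+3$ equals $p_1p_2p_3p_4$. Let $p=\underline{0102}$ and $q=\underline{0112}$. Algorithm A, on input an integer sequence $\mathrm{seq}=\epsilon_1\cdots\epsilon_n$: let $E_p$, $E_q$ be the sets of positions of occurrences of $p$, resp. $q$, in the input sequence; set $\mathrm{last}:=$ null. For $i=1,2,\dots,n$ in order: let $N_p,N_q$ be the sets of positions of occurrences of $p$, resp. $q$, in the current sequence. If $i-2\in E_p$: set $\mathrm{last}:=\mathrm{seq}[i]$ and $\mathrm{seq}[i]:=\mathrm{seq}[i-1]$. Else if $i-2\in E_q$: set $\mathrm{last}:=\mathrm{seq}[i]$ and $\mathrm{seq}[i]:=\mathrm{seq}[i-2]$. Else if $i-2\in N_p$ or $i-2\in N_q$: swap the values of $\mathrm{seq}[i]$ and $\mathrm{last}$. Output $\mathrm{seq}$. *)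

(* Defs.v *)
From mathcomp Require Import all_boot all_order all_algebra.
Set Implicit Arguments. Unset Strict Implicit. Unset Printing Implicit Defensive.
Import Order.TTheory GRing.Theory Num.Theory.
Local Open Scope ring_scope.

(* Reduction of an integer word: each entry x is replaced by the number of
   distinct values of the word strictly smaller than x (= k-1 for the k-th
   smallest distinct value). *)
Definition red (w : seq int) : seq nat :=
  [seq size (undup [seq y <- w | y < x]) | x <- w].

Definition occurs (pat : seq nat) (s : seq int) (i : nat) : bool :=
  red (take (size pat) (drop i s)) == pat.

Definition pat_p : seq nat := [:: 0; 1; 0; 2]%N.
Definition pat_q : seq nat := [:: 0; 1; 1; 2]%N.

(* One step of Algorithm A (0-based index i, "position i-2" is i-2 with i>=2).
   State = (current sequence, last) with last = None meaning null. *)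
Definition stepA (e : seq int) (st : seq int * option int) (i : nat)
  : seq int * option int :=
  let: (s, last) := st in
  if (2 <= i)%N && occurs pat_p e (i - 2) then
    (set_nth 0 s i (nth 0 s i.-1), Some (nth 0 s i))
  else if (2 <= i)%N && occurs pat_q e (i - 2) then
    (set_nth 0 s i (nth 0 s (i - 2)), Some (nth 0 s i))
  else if (2 <= i)%N && (occurs pat_p s (i - 2) || occurs pat_q s (i - 2)) then
    (set_nth 0 s i (odflt (nth 0 s i) last), Some (nth 0 s i))
  else (s, last).

Definition stateA (e : seq int) (k : nat) : seq int * option int :=
  foldl (stepA e) (e, None) (iota 0 k).

(* Main.v *)
Require Import Defs.
From mathcomp Require Import all_boot all_order all_algebra.
From mathcomp Require Import zify.
Set Implicit Arguments. Unset Strict Implicit. Unset Printing Implicit Defensive.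
Import Order.TTheory GRing.Theory Num.Theory.

Section Aux.
Local Open Scope ring_scope.

Definition rr (w : seq int) (x : int) : nat := size (undup [seq z <- w | z < x]).
Arguments rr : simpl never.

Lemma redE w : red w = map (rr w) w. Proof. by []. Qed.

Lemma red_le (w : seq int) (x y : int) : y <= x -> (rr w y <= rr w x)%N.
Proof.
move=> yx; apply: uniq_leq_size; first exact: undup_uniq.
move=> z; rewrite !mem_undup !mem_filter => /andP[zy zw]; rewrite zw andbT.
exact: lt_le_trans zy yx.
Qed.

Lemma red_lt (w : seq int) (x y : int) : y \in w -> y < x -> (rr w y < rr w x)%N.
Proof.
move=> yw yx.
have: (size (y :: undup [seq z <- w | (z < y)%R]) <= rr w x)%N.
  apply: uniq_leq_size; first by rewrite /= undup_uniq mem_undup mem_filter ltxx.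
  move=> z; rewrite inE !mem_undup !mem_filter => /orP[/eqP->|/andP[zy zw]].
    by rewrite yx yw.
  by rewrite zw (lt_trans zy yx).
by [].
Qed.

Lemma r_lt (w : seq int) (x y : int) : (rr w x < rr w y)%N -> x < y.
Proof. by case: (ltP x y) => // yx; rewrite ltnNge red_le. Qed.

Lemma r_eq (w : seq int) (x y : int) : x \in w -> y \in w -> rr w x = rr w y -> x = y.
Proof.
move=> xw yw; case: (ltgtP x y) => // h E.
  by have := red_lt xw h; rewrite E ltnn.
by have := red_lt yw h; rewrite E ltnn.
Qed.

Definition at_ (x : seq int) (i : nat) : int := nth 0 x i.

Definition Occ (x : seq int) j := occurs pat_p x j || occurs pat_q x j.

Lemma window (x : seq int) j : (j.+3 < size x)%N ->
  take 4%N (drop j x) = [:: nth 0 x j; nth 0 x j.+1; nth 0 x j.+2; nth 0 x j.+3].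
Proof.
move=> h.
rewrite (drop_nth (0:int) (n:=j)); last lia.
rewrite (drop_nth (0:int) (n:=j.+1)); last lia.
rewrite (drop_nth (0:int) (n:=j.+2)); last lia.
rewrite (drop_nth (0:int) (n:=j.+3)); last lia.
by rewrite /= take0.
Qed.

Lemma occursE pat x j : size pat = 4%N -> occurs pat x j =
  (j.+3 < size x)%N && (red [:: nth 0 x j; nth 0 x j.+1; nth 0 x j.+2; nth 0 x j.+3] == pat).
Proof.
move=> sp; case: (ltnP j.+3 (size x)) => h.
  by rewrite /occurs sp window.
apply/negbTE/eqP => E; have := congr1 size E.
rewrite size_map size_take size_drop sp; case: ifP => /=; lia.
Qed.

Lemma occ_facts x j : Occ x j ->
  [/\ (j.+3 < size x)%N, nth 0 x j < nth 0 x j.+1, nth 0 x j.+2 <= nth 0 x j.+1,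
      nth 0 x j.+2 < nth 0 x j.+3 & nth 0 x j.+1 < nth 0 x j.+3].
Proof.
rewrite /Occ !occursE //.
set a := nth 0 x j; set b := nth 0 x j.+1; set c := nth 0 x j.+2; set d := nth 0 x j.+3.
have ina : a \in [:: a; b; c; d] by rewrite !inE eqxx.
have inb : b \in [:: a; b; c; d] by rewrite !inE eqxx ?orbT.
have inc : c \in [:: a; b; c; d] by rewrite !inE eqxx ?orbT.
have L u v : (rr [:: a; b; c; d] u < rr [:: a; b; c; d] v)%N -> u < v := @r_lt _ u v.
case/orP => /andP[hs]; rewrite redE /= => /eqP [h0 h1 h2 h3].
  split => //; try (apply: L; rewrite ?h0 ?h1 ?h2 ?h3 //; fail).
  by apply: ltW; apply: L; rewrite h1 h2.
split => //; try (apply: L; rewrite ?h0 ?h1 ?h2 ?h3 //; fail).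
by rewrite (r_eq inc inb) // h1 h2.
Qed.

End Aux.

Ltac ilia := repeat match goal with
 | H : context [@nth ?T ?d ?s ?i] |- _ => progress change (@nth T d s i) with (at_ s i) in H
 | |- context [@nth ?T ?d ?s ?i] => progress change (@nth T d s i) with (at_ s i)
end; lia.

Section Alg.
Local Open Scope ring_scope.
Variable e : seq int.

Definition sA k := (stateA e k).1.
Definition fA m := nth 0 (sA m.+1) m.
Local Notation ev m := (nth 0 e m).
Definition TA m := (2 <= m)%N && (Occ e (m - 2) || Occ (sA m) (m - 2)).

Lemma stateS k : stateA e k.+1 = stepA e (stateA e k) k.
Proof. by rewrite /stateA -addn1 iotaD foldl_cat add0n. Qed.

Lemma stepP (x : seq int) l i :
 [\/ ~~ ((2 <= i)%N && (Occ e (i - 2) || Occ x (i - 2))) /\ stepA e (x, l) i = (x, l),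
     [/\ (2 <= i)%N, occurs pat_p e (i - 2) &
        stepA e (x, l) i = (set_nth 0 x i (nth 0 x i.-1), Some (nth 0 x i))],
     [/\ (2 <= i)%N, ~~ occurs pat_p e (i - 2), occurs pat_q e (i - 2) &
        stepA e (x, l) i = (set_nth 0 x i (nth 0 x (i - 2)), Some (nth 0 x i))] |
     [/\ (2 <= i)%N, ~~ Occ e (i - 2), Occ x (i - 2) &
        stepA e (x, l) i = (set_nth 0 x i (odflt (nth 0 x i) l), Some (nth 0 x i))]].
Proof.
rewrite /stepA /Occ.
case: (2 <= i)%N; last by apply: Or41.
case Hp: (occurs pat_p e (i - 2)); first by apply: Or42.
case Hq: (occurs pat_q e (i - 2)); first by apply: Or43.
case Hx: (occurs pat_p x (i - 2) || occurs pat_q x (i - 2)); first by apply: Or44.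
by apply: Or41.
Qed.

Lemma stepk k :
 [\/ ~~ TA k /\ stateA e k.+1 = (sA k, (stateA e k).2),
     [/\ (2 <= k)%N, occurs pat_p e (k - 2) &
        stateA e k.+1 = (set_nth 0 (sA k) k (nth 0 (sA k) k.-1), Some (nth 0 (sA k) k))],
     [/\ (2 <= k)%N, ~~ occurs pat_p e (k - 2), occurs pat_q e (k - 2) &
        stateA e k.+1 = (set_nth 0 (sA k) k (nth 0 (sA k) (k - 2)), Some (nth 0 (sA k) k))] |
     [/\ (2 <= k)%N, ~~ Occ e (k - 2), Occ (sA k) (k - 2) &
        stateA e k.+1 = (set_nth 0 (sA k) k (odflt (nth 0 (sA k) k) (stateA e k).2), Some (nth 0 (sA k) k))]].
Proof. rewrite stateS /TA /sA; case: (stateA e k) => x l; exact: stepP. Qed.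

Lemma nth_other k m : m != k -> nth 0 (sA k.+1) m = nth 0 (sA k) m.
Proof.
move=> ne; rewrite {1}/sA.
by case: (stepk k) => [[_ ->]|[_ _ ->]|[_ _ _ ->]|[_ _ _ ->]] //=;
  rewrite nth_set_nth /=; case: ifP => // /eqP E; rewrite E eqxx in ne.
Qed.

Lemma S2 k m : nth 0 (sA k) m = if (m < k)%N then fA m else ev m.
Proof.
elim: k => [|k IH]; first by [].
case: (eqVneq m k) => [->|ne]; first by rewrite ltnSn.
rewrite nth_other // IH; congr (if _ then _ else _).
move/eqP: ne => ne; apply/idP/idP => h; lia.
Qed.

Lemma S2_lt k m : (m < k)%N -> nth 0 (sA k) m = fA m.
Proof. by move=> h; rewrite S2 h. Qed.

Lemma S2_ge k m : (k <= m)%N -> nth 0 (sA k) m = ev m.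
Proof. by move=> h; rewrite S2; case: ifP => //; lia. Qed.


Lemma occP x j : occurs pat_p x j -> Occ x j. Proof. by rewrite /Occ => ->. Qed.
Lemma occQ x j : occurs pat_q x j -> Occ x j. Proof. by rewrite /Occ => ->; rewrite orbT. Qed.

Lemma size_s k : size (sA k) = size e.
Proof.
elim: k => [|k IH]; first by [].
rewrite {1}/sA.
case: (stepk k) => [[_ ->]|[h2 /occP /occ_facts [hs _ _ _ _] ->]|[h2 _ /occQ /occ_facts [hs _ _ _ _] ->]|[h2 _ /occ_facts [hs _ _ _ _] ->]] //=;
  rewrite size_set_nth ?IH; apply/maxn_idPr; rewrite ?IH in hs; lia.
Qed.

Lemma notT m : ~~ TA m -> fA m = ev m.
Proof.
move=> nT; rewrite /fA {1}/sA.
case: (stepk m) => [[_ ->]|[h2 hp _]|[h2 _ hq _]|[h2 ho hs _]] /=.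
- exact: S2_ge.
- by rewrite /TA h2 /Occ hp in nT.
- by rewrite /TA h2 /Occ hq orbT in nT.
- by rewrite /TA h2 hs orbT in nT.
Qed.

Lemma lastT m : TA m -> (stateA e m.+1).2 = Some (ev m).
Proof.
move=> T.
case: (stepk m) => [[nT _]|[_ _ ->]|[_ _ _ ->]|[_ _ _ ->]] /=; first by rewrite T in nT.
all: by rewrite S2_ge.
Qed.

Lemma lastN m : ~~ TA m -> (stateA e m.+1).2 = (stateA e m).2.
Proof.
move=> nT; case: (stepk m) => [[_ ->]|[h2 hp _]|[h2 _ hq _]|[h2 ho hs _]] //=.
- by rewrite /TA h2 /Occ hp in nT.
- by rewrite /TA h2 /Occ hq orbT in nT.
- by rewrite /TA h2 hs orbT in nT.
Qed.

Lemma win2 n : [/\ nth 0 (sA n.+2) n = fA n, nth 0 (sA n.+2) n.+1 = fA n.+1,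
  nth 0 (sA n.+2) n.+2 = ev n.+2 & nth 0 (sA n.+2) n.+3 = ev n.+3].
Proof. by split; [rewrite S2_lt | rewrite S2_lt | rewrite S2_ge | rewrite S2_ge]. Qed.

Lemma L1 m : TA m -> (2 <= m)%N /\ ev m < ev m.+1.
Proof.
case/andP => h2 /orP[] /occ_facts [_ _ _ h _]; split => //.
all: have E2 : (m - 2).+2 = m by lia.
all: have E3 : (m - 2).+3 = m.+1 by lia.
all: rewrite E2 in h.
  exact: h.
by rewrite !S2_ge in h.
Qed.

Lemma fcase1 m : (2 <= m)%N -> occurs pat_p e (m - 2) -> fA m = fA m.-1.
Proof.
move=> h2 hp; rewrite /fA {1}/sA.
case: (stepk m) => [[nT _]|[_ _ ->]|[_ hp' _ _]|[_ ho _ _]] /=.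
- by rewrite /TA h2 /Occ hp in nT.
- by rewrite nth_set_nth /= eqxx S2_lt //; lia.
- by rewrite hp in hp'.
- by rewrite /Occ hp in ho.
Qed.

Lemma fcase2 m : (2 <= m)%N -> ~~ occurs pat_p e (m - 2) -> occurs pat_q e (m - 2) ->
  fA m = fA (m - 2).
Proof.
move=> h2 np hq; rewrite /fA {1}/sA.
case: (stepk m) => [[nT _]|[_ hp _]|[_ _ _ ->]|[_ ho _ _]] /=.
- by rewrite /TA h2 /Occ hq orbT in nT.
- by rewrite hp in np.
- by rewrite nth_set_nth /= eqxx S2_lt //; lia.
- by rewrite /Occ hq orbT in ho.
Qed.

Lemma fcase3 m : (2 <= m)%N -> ~~ Occ e (m - 2) -> Occ (sA m) (m - 2) ->
  fA m = odflt (ev m) (stateA e m).2.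
Proof.
move=> h2 no hs; rewrite /fA {1}/sA.
case: (stepk m) => [[nT _]|[_ hp _]|[_ _ hq _]|[_ _ _ ->]] /=.
- by rewrite /TA h2 hs orbT in nT.
- by rewrite /Occ hp in no.
- by rewrite /Occ hq orbT in no.
- by rewrite nth_set_nth /= eqxx S2_ge.
Qed.

Lemma V m : TA m -> fA m < ev m.+1.
Proof.
elim/ltn_ind: m => m IH HT; have [h2 hL] := L1 HT.
have [n En] : exists n, m = n.+2 by exists (m - 2)%N; lia.
subst m; have E : (n.+2 - 2 = n)%N by lia.
case Hp: (occurs pat_p e n).
  have Hp' : occurs pat_p e (n.+2 - 2) by rewrite E.
  rewrite (fcase1 h2 Hp') /=.
  have [_ _ hc _ hbd] := occ_facts (occP Hp).
  have nT1 : ~~ TA n.+1.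
    by apply/negP => T1; have [_ h'] := L1 T1; lia.
  by rewrite notT.
case Hq: (occurs pat_q e n).
  have np : ~~ occurs pat_p e (n.+2 - 2) by rewrite E Hp.
  have hq : occurs pat_q e (n.+2 - 2) by rewrite E.
  rewrite (fcase2 h2 np hq) E.
  have [_ hab _ _ hbd] := occ_facts (occQ Hq).
  case T0: (TA n).
    have lt0 : (n < n.+2)%N by lia.
    by have := IH n lt0 T0; lia.
  by rewrite notT ?T0 //; lia.
have nOe : ~~ Occ e n by rewrite /Occ Hp Hq.
have Os : Occ (sA n.+2) n by move: HT; rewrite /TA E (negbTE nOe).
have no : ~~ Occ e (n.+2 - 2) by rewrite E.
have os : Occ (sA n.+2) (n.+2 - 2) by rewrite E.
rewrite (fcase3 h2 no os).
have [w0 w1 w2 w3] := win2 n.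
have [hsz hab hcb hcd hbd] := occ_facts Os.
rewrite w0 w1 w2 w3 in hab hcb hcd hbd.
case T1: (TA n.+1).
  have lt1 : (n.+1 < n.+2)%N by lia.
  by have := IH n.+1 lt1 T1; lia.
case T0: (TA n).
  rewrite (lastN (negbT T1)) (lastT T0) /=.
  have [_ h0] := L1 T0.
  rewrite notT ?T1 // in hbd. ilia.
exfalso; move: nOe Os; rewrite /Occ !occursE // size_s w0 w1 w2 w3 !notT ?T0 ?T1 //.
by move/negP.
Qed.

Lemma NA m : TA m -> ~~ TA m.+1.
Proof.
move=> Tm; have [h2 hL] := L1 Tm; have hV := V Tm.
have [n En] : exists n, m = n.+2 by exists (m - 2)%N; lia.
subst m; have E : (n.+3 - 2 = n.+1)%N by lia.
apply/negP => /andP[_]; rewrite E => /orP[] /occ_facts [_ _ hc _ _].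
  lia.
have [_ w1 w2 _] := win2 n.+1.
rewrite w1 w2 in hc; lia.
Qed.

End Alg.

Theorem lemma3 (e : seq int) (k j : nat) :
  (k <= size e)%N ->
  occurs pat_p (stateA e k).1 j || occurs pat_q (stateA e k).1 j ->
  nth 0%R (stateA e k).1 j.+1 = nth 0%R e j.+1 /\
  nth 0%R (stateA e k).1 j.+3 = nth 0%R e j.+3.
Proof.
move=> _ Ho; have {Ho} Ho : Occ (sA e k) j by [].
have [_ _ hcb _ _] := occ_facts Ho.
have c1 : (j.+1 < k)%N -> ~~ TA e j.+1.
  move=> lt1; apply/negP => T1.
  have hV := V T1.
  rewrite (S2_lt _ lt1) in hcb.
  have e2 : nth 0%R (sA e k) j.+2 = nth 0%R e j.+2.
    rewrite S2; case: ifP => // _; apply: notT.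
    exact: NA T1.
  rewrite e2 in hcb; ilia.
have c3 : (j.+3 < k)%N -> ~~ TA e j.+3.
  move=> lt3; apply/negP => T3.
  have n1 : ~~ TA e j.+1 by apply: c1; lia.
  have n2 : ~~ TA e j.+2 by apply/negP => T2; move: (NA T2); rewrite T3.
  have E : (j.+3 - 2 = j.+1)%N by lia.
  move: (T3); rewrite /TA E => /andP[_ /orP[]] /occ_facts [_ hab _ _ _].
    rewrite (S2_lt _ (_ : (j.+1 < k)%N)) ?(S2_lt _ (_ : (j.+2 < k)%N)) in hcb; try lia.
    rewrite !notT // in hcb; ilia.
  have [w0 w1 _ _] := win2 e j.+1.
  rewrite w0 w1 !notT // in hab.
  rewrite (S2_lt _ (_ : (j.+1 < k)%N)) ?(S2_lt _ (_ : (j.+2 < k)%N)) in hcb; try lia.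
  rewrite !notT // in hcb; ilia.
rewrite -/(sA e k) !S2; split.
  by case: ifP => // h; rewrite notT // c1.
by case: ifP => // h; rewrite notT // c3.
Qed.
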